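(* Let $(\Gamma,\rho)$ be a voltage graph with $\Gamma=(V,E)$ rooted and voltage group $G$ a finite group, with local groups $\{G_i\}$ and directed local groups $\{G_i^*\}$, and let $\overline\Gamma$ be its derived graph. Then every (weakly) connected component of $\overline\Gamma$ is rooted if and only if $G_i^*=G_i$ for some root $v_i$ of $\Gamma$; moreover, $G_i^*=G_i$ holds for some root of $\Gamma$ if and only if it holds for every root of $\Gamma$.
   Context: $\Gamma$ is a simple digraph, $e_{ij}$ the edge $v_i\to v_j$; $\rho:E\to G$. A semi-walk is $w=v_{i_1}a_1\dots a_{n-1}v_{i_n}$ with each $a_j\in\{e_{i_ji_{j+1}},e_{i_{j+1}i_j}\}$; closed if $v_{i_1}=v_{i_n}$; a walk if every $a_j=e_{i_ji_{j+1}}$; a path is a walk with distinct vertices. Net voltage $f(w)=\bar\rho(a_1)\cdots\bar\rho(a_{n-1})$, $\bar\rho(a_j)=\rho(a_j)$ for forward edges and $\rho(a_j)^{-1}$ for backward ones ($f=\mathbf 1$ on a single vertex). Local group $G_i=\{f(w): w$ closed semi-walk at $v_i\}$, directed local group $G_i^*=\{f(w): w$ closed walk at $v_i\}$. A digraph is rooted if some vertex (a root) is reachable by a path from every vertex. The derived graph $\overline\Gamma$ has vertex set $G\times V$ (vertices written $[g,v_i]$) and an edge $[g_i,v_i]\to[g_j,v_j]$ iff $e_{ij}\in E$ and $g_j=g_i\cdot\rho(e_{ij})$. Connected components of $\overline\Gamma$ are its maximal weakly connected subgraphs (any two vertices joined by a semi-walk). *)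

(* Defs.v *)
From mathcomp Require Import all_boot all_fingroup.
Set Implicit Arguments. Unset Strict Implicit. Unset Printing Implicit Defensive.

Section Digraphs.
Variables (T : finType) (e : rel T).

Fixpoint is_semiwalk (x : T) (s : seq (T * bool)) : Prop :=
  match s with
  | [::] => True
  | (y, b) :: s' => (if b then e x y else e y x) /\ is_semiwalk y s'
  end.

Definition sw_end (x : T) (s : seq (T * bool)) : T := last x (map fst s).

Definition is_walk (x : T) (s : seq (T * bool)) : Prop :=
  is_semiwalk x s /\ all snd s.

Definition wconn (x y : T) : Prop :=
  exists s, is_semiwalk x s /\ sw_end x s = y.

Definition path_in (C : T -> Prop) (x y : T) : Prop :=
  exists s : seq T, [/\ path e x s, uniq (x :: s), last x s = y &
                        forall z, z \in x :: s -> C z].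

Definition is_root_in (C : T -> Prop) (r : T) : Prop :=
  C r /\ forall y, C y -> path_in C y r.

Definition rooted_in (C : T -> Prop) : Prop := exists r, is_root_in C r.

Definition is_root (r : T) : Prop := is_root_in (fun _ => True) r.
Definition rooted : Prop := rooted_in (fun _ => True).

Definition component (x : T) : T -> Prop := wconn x.

End Digraphs.

Section Voltage.
Variables (gT : finGroupType) (V : finType) (e : rel V) (rho : V -> V -> gT).
Local Open Scope group_scope.

Fixpoint net_voltage (x : V) (s : seq (V * bool)) : gT :=
  match s with
  | [::] => 1
  | (y, b) :: s' => (if b then rho x y else (rho y x)^-1) * net_voltage y s'
  end.

Definition local_group (i : V) (g : gT) : Prop :=
  exists s, [/\ is_semiwalk e i s, sw_end i s = i & net_voltage i s = g].

Definition dlocal_group (i : V) (g : gT) : Prop :=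
  exists s, [/\ is_walk e i s, sw_end i s = i & net_voltage i s = g].

Definition local_groups_eq (i : V) : Prop :=
  forall g, dlocal_group i g <-> local_group i g.

Definition derived_rel : rel (gT * V) :=
  fun a b => e a.2 b.2 && (b.1 == a.1 * rho a.2 b.2).

End Voltage.

(* Main.v *)
Require Import Defs.
From mathcomp Require Import all_boot all_fingroup.
Set Implicit Arguments. Unset Strict Implicit.

Section Gen.
Variables (T : finType) (E : rel T).

Lemma sw_cat (x : T) (s t : seq (T * bool)) : is_semiwalk E x (s ++ t) <->
  is_semiwalk E x s /\ is_semiwalk E (sw_end x s) t.
Proof.
elim: s x => [|[y b] s IH] x /=; first by tauto.
move: (IH y); rewrite /sw_end /=; tauto.
Qed.

Lemma sw_end_cat (x : T) (s t : seq (T * bool)) : sw_end x (s ++ t) = sw_end (sw_end x s) t.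
Proof. by rewrite /sw_end map_cat last_cat. Qed.

Lemma wconn_refl (x : T) : wconn E x x.
Proof. by exists [::]. Qed.

Lemma wconn_cons (x y z : T) b : (if b then E x y else E y x) -> wconn E y z -> wconn E x z.
Proof. by move=> H [s [Hs He]]; exists ((y, b) :: s). Qed.

Lemma wconn_trans (x y z : T) : wconn E x y -> wconn E y z -> wconn E x z.
Proof.
move=> [s [Hs <-]] [t [Ht <-]]; exists (s ++ t); split.
  by apply/sw_cat.
by rewrite sw_end_cat.
Qed.

Lemma wconn_sym (x y : T) : wconn E x y -> wconn E y x.
Proof.
move=> [s [Hs <-]]; elim: s x Hs => [|[y' b] s IH] x /=; first by move=> _; exact: wconn_refl.
move=> [Hb Hs]; have [t [Ht Hte]] := IH _ Hs.
exists (t ++ [:: (x, ~~ b)]); split.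
  apply/sw_cat; split => //=; rewrite /sw_end in Hte *; rewrite Hte.
  by case: b Hb.
by rewrite sw_end_cat /sw_end /=.
Qed.

Lemma path_wconn (x : T) p z : path E x p -> z \in x :: p -> wconn E x z.
Proof.
elim: p x => [|y p IH] x /=.
  by rewrite mem_seq1 => _ /eqP ->; exact: wconn_refl.
move=> /andP [Hxy Hp]; rewrite in_cons => /orP [/eqP -> | Hz].
  exact: wconn_refl.
by apply: (@wconn_cons _ y _ true) => //; apply: IH.
Qed.

Lemma path_walk (x : T) p : path E x p <-> is_semiwalk E x [seq (z, true) | z <- p].
Proof.
elim: p x => [|y p IH] x /=; first by [].
case: (IH y) => H1 H2; split.
  by move=> /andP [-> /H1].
by move=> [-> /H2] ->.
Qed.

Lemma walk_map (x : T) s : is_walk E x s -> s = [seq (z, true) | z <- map fst s].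
Proof.
move=> [_]; elim: s => [|[y b] s IH] //= /andP [Hb Hs].
by rewrite /= in Hb; rewrite Hb -IH.
Qed.

End Gen.

Section Volt.
Variables (gT : finGroupType) (V : finType) (e : rel V) (rho : V -> V -> gT).
Local Open Scope group_scope.
Notation D := (derived_rel e rho).

Definition pv (x : V) (p : seq V) := net_voltage rho x [seq (z, true) | z <- p].

Lemma lift_path p g u : path e u p ->
  exists q, path D (g, u) q /\ last (g, u) q = (g * pv u p, last u p).
Proof.
elim: p g u => [|v p IH] g u /=.
  by move=> _; exists [::]; rewrite mulg1.
move=> /andP [Huv Hp]; have [q [Hq Hl]] := IH (g * rho u v) v Hp.
exists ((g * rho u v, v) :: q) => /=; split.
  by rewrite Hq andbT /derived_rel /= Huv eqxx.
by rewrite Hl /pv /= mulgA.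
Qed.

Lemma proj_path q a : path D a q ->
  path e a.2 (map snd q) /\ last a q = (a.1 * pv a.2 (map snd q), last a.2 (map snd q)).
Proof.
elim: q a => [|b q IH] [g u] /=.
  by move=> _; rewrite mulg1.
move=> /andP [/andP [Hab /eqP Hb] Hq]; have [Hp Hl] := IH b Hq.
split; first by rewrite Hab.
by rewrite Hl Hb /pv /= mulgA.
Qed.

Lemma lift_sw s g u : is_semiwalk e u s ->
  wconn D (g, u) (g * net_voltage rho u s, sw_end u s).
Proof.
elim: s g u => [|[y b] s IH] g u /=.
  by move=> _; rewrite mulg1; exact: wconn_refl.
move=> [Hb Hs]; case: b Hb => Hb.
  apply: (@wconn_cons _ _ _ (g * rho u y, y) _ true).
    by rewrite /derived_rel /= Hb eqxx.
  by have := IH (g * rho u y) y Hs; rewrite mulgA.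
apply: (@wconn_cons _ _ _ (g * (rho y u)^-1, y) _ false).
  by rewrite /derived_rel /= Hb mulgKV eqxx.
by have := IH (g * (rho y u)^-1) y Hs; rewrite mulgA.
Qed.

Lemma proj_sw s a : is_semiwalk D a s ->
  exists t, [/\ is_semiwalk e a.2 t, sw_end a.2 t = (sw_end a s).2 &
             (sw_end a s).1 = a.1 * net_voltage rho a.2 t].
Proof.
elim: s a => [|[b bb] s IH] a /=.
  by move=> _; exists [::]; rewrite mulg1.
move=> [Hb Hs]; have [t [Ht Hte Htv]] := IH b Hs.
exists ((b.2, bb) :: t); rewrite /sw_end /= in Hte Htv *.
case: bb Hb => /andP [Hab /eqP Hbv] /=.
  by split => //; rewrite Htv Hbv mulgA.
split => //; rewrite Htv mulgA; congr (_ * _).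
by rewrite Hbv mulgK.
Qed.

Lemma wconn_proj a b : wconn D a b ->
  exists t, [/\ is_semiwalk e a.2 t, sw_end a.2 t = b.2 & b.1 = a.1 * net_voltage rho a.2 t].
Proof. by move=> [s [Hs <-]]; apply: proj_sw. Qed.

Lemma P1 r : is_root e r -> local_groups_eq e rho r ->
  forall x, rooted_in D (component D x).
Proof.
move=> [_ Hr] Heq [g u].
have [p [Hp _ Hpl _]] := Hr u I.
set R := (g * pv u p, r).
have [q0 [Hq0 Hq0l]] := lift_path g Hp.
have CR : wconn D (g, u) R.
  apply: (path_wconn Hq0); rewrite /R -Hpl -Hq0l; exact: mem_last.
exists R; split => // [[h v]] Cy.
have [q [Hq _ Hql _]] := Hr v I.
have [q1 [Hq1 Hq1l]] := lift_path h Hq.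
rewrite Hql in Hq1l.
set Y := (h * pv v q, r).
have CY : wconn D (h, v) Y.
  apply: (path_wconn Hq1); rewrite /Y -Hq1l; exact: mem_last.
have YR : wconn D Y R.
  apply: wconn_trans (wconn_sym (wconn_trans Cy CY)) CR.
have [t [Ht Hte Htv]] := wconn_proj YR.
have [c [Hc Hce Hcv]] := (proj2 (Heq _)) (ex_intro _ t (And3 Ht Hte erefl)).
have Hcm := walk_map Hc.
have Hcp : path e r (map fst c) by apply/path_walk; rewrite -Hcm; exact: Hc.1.
have [q2 [Hq2 Hq2l]] := lift_path (h * pv v q) Hcp.
have Hend : last (h, v) (q1 ++ q2) = R.
  rewrite last_cat Hq1l Hq2l /pv -Hcm Hcv /R -Htv /=.
  by rewrite /sw_end in Hce; rewrite Hce.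
have Hpath : path D (h, v) (q1 ++ q2) by rewrite cat_path Hq1 Hq1l.
case: (shortenP Hpath) Hend => p' Hp' Hu _ Hl.
exists p'; split => // z Hz.
by apply: wconn_trans Cy (path_wconn Hp' Hz).
Qed.

Lemma P2 : (forall x, rooted_in D (component D x)) ->
  forall r, is_root e r -> local_groups_eq e rho r.
Proof.
move=> Hall r [_ Hr] g; split.
  by move=> [s [[Hs _] He Hv]]; exists s.
move=> [s [Hs He Hv]].
have [[k v] [CR HR]] := Hall (1, r).
have [p [Hp _ Hpl _]] := Hr v I.
have [q0 [Hq0 Hq0l]] := lift_path k Hp.
rewrite Hpl in Hq0l.
set m := k * pv v p.
have RM : wconn D (k, v) (m, r).
  apply: (path_wconn Hq0); rewrite -Hq0l; exact: mem_last.
have CM := wconn_trans CR RM.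
have YM := lift_sw (m * g^-1) Hs.
rewrite He Hv mulgKV in YM.
have CY := wconn_trans CM (wconn_sym YM).
have [q [Hq _ Hql _]] := HR _ CY.
have Hpath : path D (m * g^-1, r) (q ++ q0).
  by rewrite cat_path Hq Hql.
have [Hpp Hlast] := proj_path Hpath.
rewrite last_cat Hql Hq0l /= in Hlast.
case: Hlast => Hm Hrr.
exists [seq (z, true) | z <- map snd (q ++ q0)]; split.
- split; first by apply/path_walk.
  by elim: (map snd _) => //.
- by rewrite /sw_end -map_comp map_id -Hrr.
- by move: Hm; rewrite /pv => Hm; apply: (mulgI (m * g^-1)); rewrite -Hm mulgKV.
Qed.

End Volt.
Unset Implicit Arguments.

Theorem theorem3 (gT : finGroupType) (V : finType) (e : rel V)
  (simple : irreflexive e) (rho : V -> V -> gT) :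
  rooted e ->
  ((forall x : gT * V,
      rooted_in (derived_rel e rho) (component (derived_rel e rho) x))
   <-> exists i, is_root e i /\ local_groups_eq e rho i)
  /\
  ((exists i, is_root e i /\ local_groups_eq e rho i)
   <-> (forall i, is_root e i -> local_groups_eq e rho i)).
Proof.
move=> [r Hr]; split; split.
- by move=> H; exists r; split => //; apply: P2.
- by move=> [i [Hi Hq]]; apply: (P1 Hi Hq).
- by move=> [i [Hi Hq]]; apply: P2; apply: (P1 Hi Hq).
- by move=> H; exists r; split => //; apply: H.
Qed.
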